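(* For every Tychonoff space $X$, the following are equivalent: (1) $C_p(X)\models S_1(\Gamma_f,\Gamma_f)$ for every $f\in C_p(X)$; (2) $X\models S_1(\Gamma_F,\Gamma)$.
   Context: All spaces are Tychonoff; $C_p(X)$ is $C(X)$ with pointwise convergence topology. For $y$ in a space $Y$: $\Gamma_y=\{A\subseteq Y: A$ infinite, $y\notin A$, every neighbourhood of $y$ contains all but finitely many points of $A\}$. Zero-set: $g^{-1}(0)$, $g\in C(X)$; cozero-set: its complement. A cover $\mathcal U$ of $X$ always means $X=\bigcup\mathcal U$, $X\notin\mathcal U$; $\gamma$-cover: infinite, each point in all but finitely many members. $\Gamma$: open $\gamma$-covers. $\Gamma_F$: $\gamma$-covers $\mathcal U$ of $X$ by cozero-sets for which there are zero-sets $F(U)\subseteq U$ ($U\in\mathcal U$) with $\{F(U):U\in\mathcal U\}$ a $\gamma$-cover of $X$. $S_1(\mathcal A,\mathcal B)$: for every sequence $(A_n)$ from $\mathcal A$ there are $b_n\in A_n$ with $\{b_n:n\in\omega\}\in\mathcal B$. *)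

(* Defs.v *)
From Stdlib Require Import Reals Rtopology List.
Open Scope R_scope.

Record topology (X : Type) := Topology {
  is_open : (X -> Prop) -> Prop;
  open_full : is_open (fun _ => True);
  open_empty : is_open (fun _ => False);
  open_union : forall F : (X -> Prop) -> Prop,
      (forall U, F U -> is_open U) -> is_open (fun x => exists U, F U /\ U x);
  open_inter : forall U V, is_open U -> is_open V -> is_open (fun x => U x /\ V x)
}.
Arguments is_open {X} t U.

Definition is_closed {X : Type} (T : topology X) (C : X -> Prop) : Prop :=
  is_open T (fun x => ~ C x).

Definition continuous {X : Type} (T : topology X) (f : X -> R) : Prop :=
  forall V : R -> Prop, open_set V -> is_open T (fun x => V (f x)).

Definition tychonoff {X : Type} (T : topology X) : Prop :=
  (forall x y : X, x <> y -> exists U, is_open T U /\ U x /\ ~ U y) /\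
  (forall (C : X -> Prop) (x : X), is_closed T C -> ~ C x ->
     exists f : X -> R, continuous T f /\ f x = 0 /\
       (forall y, C y -> f y = 1) /\ (forall y, 0 <= f y <= 1)).

Definition finite_set {A : Type} (S : A -> Prop) : Prop :=
  exists l : list A, forall a, S a -> In a l.
Definition infinite_set {A : Type} (S : A -> Prop) : Prop := ~ finite_set S.

(* Points of C_p(X) are the continuous f : X -> R; subsets of C_p(X) are
   predicates on X -> R (values at non-continuous functions are irrelevant). *)

Definition cp_basic {X : Type} (f : X -> R) (F : list X) (eps : R) (g : X -> R) : Prop :=
  forall x, In x F -> Rabs (g x - f x) < eps.

Definition cp_open {X : Type} (T : topology X) (O : (X -> R) -> Prop) : Prop :=
  forall f, continuous T f -> O f ->
    exists (F : list X) (eps : R), 0 < eps /\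
      forall g, continuous T g -> cp_basic f F eps g -> O g.

Definition cp_nbhd {X : Type} (T : topology X) (f : X -> R) (N : (X -> R) -> Prop) : Prop :=
  exists O, cp_open T O /\ O f /\ (forall g, continuous T g -> O g -> N g).

Definition Gamma_pt {X : Type} (T : topology X) (f : X -> R) (A : (X -> R) -> Prop) : Prop :=
  (forall g, A g -> continuous T g) /\
  infinite_set A /\ ~ A f /\
  (forall N, cp_nbhd T f N -> finite_set (fun g => A g /\ ~ N g)).

Definition Cp_S1_Gamma_pt {X : Type} (T : topology X) (f : X -> R) : Prop :=
  forall A : nat -> (X -> R) -> Prop,
    (forall n, Gamma_pt T f (A n)) ->
    exists b : nat -> (X -> R), (forall n, A n (b n)) /\
      Gamma_pt T f (fun g => exists n, g = b n).

Definition zero_set {X : Type} (T : topology X) (Z : X -> Prop) : Prop :=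
  exists g, continuous T g /\ forall x, Z x <-> g x = 0.
Definition cozero_set {X : Type} (T : topology X) (U : X -> Prop) : Prop :=
  exists g, continuous T g /\ forall x, U x <-> g x <> 0.

Definition is_cover {X : Type} (C : (X -> Prop) -> Prop) : Prop :=
  (forall x, exists U, C U /\ U x) /\
  (forall U, C U -> exists x, ~ U x).

Definition gamma_cover {X : Type} (C : (X -> Prop) -> Prop) : Prop :=
  is_cover C /\ infinite_set C /\
  (forall x, finite_set (fun U => C U /\ ~ U x)).

Definition Gamma_open {X : Type} (T : topology X) (C : (X -> Prop) -> Prop) : Prop :=
  gamma_cover C /\ (forall U, C U -> is_open T U).

Definition Gamma_F {X : Type} (T : topology X) (C : (X -> Prop) -> Prop) : Prop :=
  gamma_cover C /\ (forall U, C U -> cozero_set T U) /\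
  exists F : (X -> Prop) -> (X -> Prop),
    (forall U, C U -> zero_set T (F U) /\ (forall x, F U x -> U x)) /\
    gamma_cover (fun Z => exists U, C U /\ Z = F U).

Definition S1_GammaF_Gamma {X : Type} (T : topology X) : Prop :=
  forall C : nat -> (X -> Prop) -> Prop,
    (forall n, Gamma_F T (C n)) ->
    exists U : nat -> (X -> Prop), (forall n, C n (U n)) /\
      Gamma_open T (fun V => exists n, V = U n).

(* Main.v *)
Require Import Defs.
From Stdlib Require Import Reals Rtopology List ClassicalEpsilon FunctionalExtensionality PropExtensionality Classical Lia Lra FinFun.
Open Scope R_scope.


Section Top.
Context {X : Type} (T : topology X).

Lemma open_ext (U V : X -> Prop) : (forall x, U x <-> V x) -> is_open T U -> is_open T V.
Proof.
  intros H HU. assert (E : U = V).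
  { apply functional_extensionality; intro x; apply propositional_extensionality; apply H. }
  subst; exact HU.
Qed.

Lemma open_local (S : X -> Prop) :
  (forall x, S x -> exists U, is_open T U /\ U x /\ forall y, U y -> S y) -> is_open T S.
Proof.
  intros H.
  apply (open_ext (fun x => exists U, (is_open T U /\ forall y, U y -> S y) /\ U x)).
  - intro x; split.
    + intros [U [[_ HU] Ux]]; auto.
    + intros Sx. destruct (H x Sx) as [U [HU [Ux HUS]]]. exists U; auto.
  - apply open_union. intros U [HU _]; exact HU.
Qed.

Definition cat (h : X -> R) (x : X) : Prop :=
  forall e, 0 < e -> exists U, is_open T U /\ U x /\ forall y, U y -> Rabs (h y - h x) < e.

Lemma cont_cat h x : continuous T h -> cat h x.
Proof.
  intros Hh e He.
  exists (fun y => disc (h x) (mkposreal e He) (h y)).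
  split; [apply Hh, disc_P1|]. split.
  - unfold disc; simpl. rewrite Rminus_diag, Rabs_R0; exact He.
  - intros y Hy; exact Hy.
Qed.

Lemma cat_cont h : (forall x, cat h x) -> continuous T h.
Proof.
  intros Hc V HV. apply open_local. intros x Vx.
  destruct (HV _ Vx) as [del Hdel].
  destruct (Hc x del (cond_pos del)) as [U [HU [Ux HUy]]].
  exists U; split; [exact HU|split; [exact Ux|]].
  intros y Uy. apply Hdel. unfold disc. apply HUy, Uy.
Qed.

Lemma cat_ext h k x : (forall y, h y = k y) -> cat h x -> cat k x.
Proof.
  intros E H e He. destruct (H e He) as [U [HU [Ux HUy]]].
  exists U; repeat split; auto. intros y Uy. rewrite <- !E. auto.
Qed.

Lemma cat_const c x : cat (fun _ => c) x.
Proof.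
  intros e He. exists (fun _ => True). repeat split; auto. apply open_full.
  intros; rewrite Rminus_diag, Rabs_R0; exact He.
Qed.

Lemma cat_comp h (phi : R -> R) x : cat h x -> continuity_pt phi (h x) -> cat (fun y => phi (h y)) x.
Proof.
  intros Hh Hp e He.
  destruct (Hp e He) as [a [Ha Hpa]].
  destruct (Hh a Ha) as [U [HU [Ux HUy]]].
  exists U; repeat split; auto. intros y Uy.
  destruct (Req_dec (h y) (h x)) as [E|E].
  - rewrite E, Rminus_diag, Rabs_R0; exact He.
  - apply (Hpa (h y)). split; [split; [exact I|auto]|]. simpl; unfold Rdist; auto.
Qed.

Lemma cat_plus h k x : cat h x -> cat k x -> cat (fun y => h y + k y) x.
Proof.
  intros Hh Hk e He.
  destruct (Hh (e/2) ltac:(lra)) as [U [HU [Ux HUy]]].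
  destruct (Hk (e/2) ltac:(lra)) as [V [HV [Vx HVy]]].
  exists (fun y => U y /\ V y). repeat split; auto. apply open_inter; auto.
  intros y [Uy Vy]. specialize (HUy y Uy). specialize (HVy y Vy).
  replace (h y + k y - (h x + k x)) with ((h y - h x) + (k y - k x)) by ring.
  eapply Rle_lt_trans; [apply Rabs_triang|]. lra.
Qed.

Lemma contpt_sq r : continuity_pt (fun t => t * t) r.
Proof. apply continuity_pt_mult; apply derivable_continuous_pt, derivable_pt_id. Qed.

Lemma contpt_lin a b r : continuity_pt (fun t => a * t + b) r.
Proof.
  apply derivable_continuous_pt. apply derivable_pt_plus.
  - apply derivable_pt_scal, derivable_pt_id.
  - apply derivable_pt_const.
Qed.

Lemma cat_lin a b h x : cat h x -> cat (fun y => a * h y + b) x.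
Proof. intros H; apply (cat_comp h (fun t => a * t + b)); auto. apply contpt_lin. Qed.

Lemma cat_abs h x : cat h x -> cat (fun y => Rabs (h y)) x.
Proof. intros H; apply (cat_comp h Rabs); auto. apply Rcontinuity_abs. Qed.

Lemma cat_mult h k x : cat h x -> cat k x -> cat (fun y => h y * k y) x.
Proof.
  intros Hh Hk.
  apply (cat_ext (fun y => /4 * ((h y + k y) * (h y + k y)) + (- /4 * ((h y + -1 * k y) * (h y + -1 * k y)) + 0))).
  { intro y; field. }
  apply cat_plus.
  - apply (cat_ext (fun y => /4 * ((h y + k y) * (h y + k y)) + 0)); [intro; ring|].
    apply (cat_lin _ _ (fun y => (h y + k y) * (h y + k y))).
    apply (cat_comp (fun y => h y + k y) (fun t => t * t)); [apply cat_plus; auto|apply contpt_sq].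
  - apply (cat_lin _ _ (fun y => (h y + -1 * k y) * (h y + -1 * k y))).
    apply (cat_comp (fun y => h y + -1 * k y) (fun t => t * t)); [|apply contpt_sq].
    apply cat_plus; auto. apply (cat_ext (fun y => -1 * k y + 0)); [intro; ring|]. apply cat_lin; auto.
Qed.

Lemma cat_inv h x : cat h x -> h x <> 0 -> cat (fun y => / h y) x.
Proof.
  intros H Hn. apply (cat_comp h Rinv); auto.
  apply (continuity_pt_inv (fun t => t)); auto.
  apply derivable_continuous_pt, derivable_pt_id.
Qed.

Lemma cont_const c : continuous T (fun _ => c).
Proof. apply cat_cont; intro; apply cat_const. Qed.

Lemma cozero_open U : cozero_set T U -> is_open T U.
Proof.
  intros [g [Hg HU]].
  apply (open_ext (fun x => (fun r => r <> 0) (g x))).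
  { intro x; rewrite HU; tauto. }
  apply (Hg (fun r => r <> 0)). intros r Hr. assert (P : 0 < Rabs r) by (apply Rabs_pos_lt; auto).
  exists (mkposreal _ P). intros y Hy. unfold disc in Hy; simpl in Hy.
  intro E; subst. rewrite Rminus_0_l, Rabs_Ropp in Hy. lra.
Qed.

End Top.


Lemma inf_ex {A} (P : A -> Prop) : infinite_set P -> forall l, exists a, P a /\ ~ In a l.
Proof.
  intros H l. apply NNPP; intro N. apply H. exists l. intros a Pa.
  apply NNPP; intro; apply N; eauto.
Qed.

Lemma fin_sub {A} (P Q : A -> Prop) : (forall a, P a -> Q a) -> finite_set Q -> finite_set P.
Proof. intros H [l Hl]; exists l; auto. Qed.

Lemma fin_map {A B} (P : A -> Prop) (Q : B -> Prop) (f : A -> B) :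
  finite_set P -> (forall b, Q b -> exists a, P a /\ b = f a) -> finite_set Q.
Proof.
  intros [l Hl] H. exists (map f l). intros b Qb. destruct (H b Qb) as [a [Pa ->]].
  apply in_map; auto.
Qed.

Lemma fin_union {A B} (F : list A) (P : A -> B -> Prop) :
  (forall x, In x F -> finite_set (P x)) -> finite_set (fun z => exists x, In x F /\ P x z).
Proof.
  induction F as [|a F IH]; intros H.
  - exists nil. intros z [x [[] _]].
  - destruct (H a (or_introl eq_refl)) as [l1 H1].
    destruct IH as [l2 H2]. { intros; apply H; right; auto. }
    exists (l1 ++ l2). intros z [x [[<-|Hx] Pz]]; apply in_or_app; [left; auto|right].
    apply H2; eauto.
Qed.

Lemma gamma_point {A} (G : (A -> Prop) -> Prop) x :
  infinite_set G -> finite_set (fun W => G W /\ ~ W x) -> exists W, G W /\ W x.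
Proof.
  intros Hi [l Hl]. destruct (inf_ex G Hi l) as [W [GW NW]].
  exists W; split; auto. apply NNPP; intro; apply NW, Hl; auto.
Qed.

Lemma list_bound {A} (L : list A) (P : A -> nat -> Prop) :
  (forall a, In a L -> exists K, forall n, (K <= n)%nat -> P a n) ->
  exists K, forall a n, In a L -> (K <= n)%nat -> P a n.
Proof.
  induction L as [|a L IH]; intros H.
  - exists 0%nat. intros b n [].
  - destruct (H a (or_introl eq_refl)) as [K1 H1].
    destruct IH as [K2 H2]. { intros; apply H; right; auto. }
    exists (Nat.max K1 K2). intros b n [<-|Hb] Hn.
    + apply H1; lia.
    + apply H2; auto; lia.
Qed.

Section Cp.
Context {X : Type} (T : topology X).

Lemma list_margin (f g : X -> R) (L : list X) eps :
  (forall x, In x L -> Rabs (g x - f x) < eps) ->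
  exists e, 0 < e /\ forall x, In x L -> Rabs (g x - f x) + e <= eps.
Proof.
  induction L as [|a L IH]; intros H.
  - exists 1; split; [lra|intros x []].
  - destruct IH as [e [He He']]. { intros; apply H; right; auto. }
    assert (Ha := H a (or_introl eq_refl)).
    exists (Rmin e (eps - Rabs (g a - f a))). split.
    + apply Rmin_pos; lra.
    + intros x [<-|Hx].
      * assert (Rmin e (eps - Rabs (g a - f a)) <= eps - Rabs (g a - f a)) by apply Rmin_r. lra.
      * assert (Rmin e (eps - Rabs (g a - f a)) <= e) by apply Rmin_l. specialize (He' x Hx). lra.
Qed.

Lemma cp_nbhd_list (f : X -> R) L eps : continuous T f -> 0 < eps -> cp_nbhd T f (cp_basic f L eps).
Proof.
  intros Hf He. exists (cp_basic f L eps). split; [|split].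
  - intros g Hg Og. destruct (list_margin f g L eps Og) as [e [He0 He1]].
    exists L, e. split; auto. intros h Hh Bh x Hx.
    specialize (Bh x Hx). specialize (He1 x Hx).
    replace (h x - f x) with ((h x - g x) + (g x - f x)) by ring.
    eapply Rle_lt_trans; [apply Rabs_triang|]. lra.
  - intros x _. rewrite Rminus_diag, Rabs_R0; auto.
  - auto.
Qed.

Lemma gamma_fin f A L eps : continuous T f -> 0 < eps -> Gamma_pt T f A ->
  finite_set (fun g => A g /\ ~ cp_basic f L eps g).
Proof.
  intros Hf He [_ [_ [_ H]]]. apply H, cp_nbhd_list; auto.
Qed.

Lemma cp_nbhd_basic f N : continuous T f -> cp_nbhd T f N ->
  exists L eps, 0 < eps /\ forall g, continuous T g -> cp_basic f L eps g -> N g.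
Proof.
  intros Hf [O [HO [Of HON]]]. destruct (HO f Hf Of) as [L [eps [He H]]].
  exists L, eps; split; auto.
Qed.

End Cp.


Lemma pts_list {Aset B} (L : list Aset) (Q : Aset -> Prop) (P : Aset -> B -> Prop) :
  (forall V, In V L -> Q V -> exists x, P V x) ->
  exists pts, forall V, In V L -> Q V -> exists x, In x pts /\ P V x.
Proof.
  induction L as [|a L IH]; intros H.
  - exists nil. intros V [].
  - destruct IH as [pts Hp]. { intros; apply H; auto; right; auto. }
    destruct (classic (Q a)) as [Qa|Qa].
    + destruct (H a (or_introl eq_refl) Qa) as [x Px].
      exists (x :: pts). intros V [<-|HV] QV.
      * exists x; split; [left|]; auto.
      * destruct (Hp V HV QV) as [y [Hy Py]]; exists y; split; [right|]; auto.
    + exists pts. intros V [<-|HV] QV; [contradiction|auto].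
Qed.

Lemma pred_eq {Aset} (P Q : Aset -> Prop) : (forall x, P x <-> Q x) -> P = Q.
Proof. intros H; apply functional_extensionality; intro; apply propositional_extensionality; auto. Qed.

Section Dir1.
Context {X : Type} (T : topology X).
Variable C : nat -> (X -> Prop) -> Prop.
Hypothesis HC : forall n, Gamma_F T (C n).

Definition iS : inhabited (X -> Prop) := inhabits (fun _ => True).
Definition iF : inhabited ((X -> Prop) -> (X -> Prop)) := inhabits (fun U => U).
Definition iR : inhabited (X -> R) := inhabits (fun _ => 0).

Definition Fspec (n : nat) (F : (X -> Prop) -> (X -> Prop)) :=
  (forall U, C n U -> zero_set T (F U) /\ (forall x, F U x -> U x)) /\
    gamma_cover (fun Z => exists U, C n U /\ Z = F U).
Definition Fn n := epsilon iF (Fspec n).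
Lemma Fn_spec n : Fspec n (Fn n).
Proof. unfold Fn; apply epsilon_spec. destruct (HC n) as [_ [_ H]]. exact H. Qed.

Definition Im1 n Z := exists U, C n U /\ Z = Fn n U.
Definition rep n Z := epsilon iS (fun U => C n U /\ Z = Fn n U).
Definition zw (Z : X -> Prop) := epsilon iR (fun h => continuous T h /\ forall x, Z x <-> h x = 0).
Definition cw (U : X -> Prop) := epsilon iR (fun h => continuous T h /\ forall x, U x <-> h x <> 0).
Definition G n Z : X -> R := fun x =>
  Rabs (zw Z x) / (Rabs (zw Z x) + Rabs (cw (rep n Z) x)).

Lemma key n Z : Im1 n Z ->
  C n (rep n Z) /\ Z = Fn n (rep n Z) /\ continuous T (zw Z) /\ (forall x, Z x <-> zw Z x = 0) /\
  continuous T (cw (rep n Z)) /\ (forall x, rep n Z x <-> cw (rep n Z) x <> 0) /\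
  (forall x, Z x -> rep n Z x).
Proof.
  intros HZ.
  assert (R1 : C n (rep n Z) /\ Z = Fn n (rep n Z)) by (unfold rep; apply epsilon_spec; exact HZ).
  destruct R1 as [HC1 HZ1].
  destruct (Fn_spec n) as [HF _]. destruct (HF _ HC1) as [Hz Hsub].
  assert (R2 : continuous T (zw Z) /\ forall x, Z x <-> zw Z x = 0).
  { unfold zw; apply epsilon_spec. rewrite HZ1. exact Hz. }
  assert (R3 : continuous T (cw (rep n Z)) /\ forall x, rep n Z x <-> cw (rep n Z) x <> 0).
  { unfold cw; apply epsilon_spec. destruct (HC n) as [_ [Hcz _]]. apply Hcz; auto. }
  destruct R2 as [R2a R2b], R3 as [R3a R3b].
  refine (conj HC1 (conj HZ1 (conj R2a (conj R2b (conj R3a (conj R3b _)))))).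
  intros y Zy. apply Hsub. rewrite <- HZ1. exact Zy.
Qed.

Lemma den_pos n Z x : Im1 n Z -> 0 < Rabs (zw Z x) + Rabs (cw (rep n Z) x).
Proof.
  intros HZ. destruct (key n Z HZ) as [_ [_ [_ [Hz [_ [Hc Hs]]]]]].
  destruct (Req_dec (zw Z x) 0) as [E|E].
  - assert (Zx : Z x) by (apply Hz; auto).
    assert (cw (rep n Z) x <> 0) by (apply Hc, Hs, Zx).
    pose proof (Rabs_pos_lt _ H). pose proof (Rabs_pos (zw Z x)). lra.
  - pose proof (Rabs_pos_lt _ E). pose proof (Rabs_pos (cw (rep n Z) x)). lra.
Qed.

Lemma G_zero n Z x : Im1 n Z -> (G n Z x = 0 <-> Z x).
Proof.
  intros HZ. pose proof (den_pos n Z x HZ). destruct (key n Z HZ) as [_ [_ [_ [Hz _]]]].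
  unfold G. rewrite Hz. split.
  - intros E. destruct (Req_dec (zw Z x) 0) as [E'|E']; auto.
    pose proof (Rabs_pos_lt _ E'). exfalso.
    assert (0 < Rabs (zw Z x) / (Rabs (zw Z x) + Rabs (cw (rep n Z) x))).
    { apply Rdiv_lt_0_compat; auto. } lra.
  - intros E; rewrite E, Rabs_R0. unfold Rdiv; ring.
Qed.

Lemma G_one n Z x : Im1 n Z -> (G n Z x <> 1 <-> rep n Z x).
Proof.
  intros HZ. pose proof (den_pos n Z x HZ). destruct (key n Z HZ) as [_ [_ [_ [Hz [_ [Hc Hs]]]]]].
  unfold G. rewrite Hc. split.
  - intros E E'. apply E. rewrite E', Rabs_R0, Rplus_0_r in *. field. lra.
  - intros E E'. apply E.
    assert (Rabs (zw Z x) = Rabs (zw Z x) + Rabs (cw (rep n Z) x)).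
    { apply (Rmult_eq_reg_r (/ (Rabs (zw Z x) + Rabs (cw (rep n Z) x)))).
      - rewrite Rinv_r by lra. exact E'.
      - apply Rinv_neq_0_compat; lra. }
    assert (Rabs (cw (rep n Z) x) = 0) by lra.
    apply NNPP; intro NE. apply (Rabs_no_R0 _ NE). exact H1.
Qed.

Lemma G_cont n Z : Im1 n Z -> continuous T (G n Z).
Proof.
  intros HZ. destruct (key n Z HZ) as [_ [_ [Hz1 [_ [Hc1 _]]]]].
  apply cat_cont; intro x. unfold G, Rdiv.
  apply cat_mult.
  - apply cat_abs, cont_cat, Hz1.
  - apply (cat_inv T (fun y => Rabs (zw Z y) + Rabs (cw (rep n Z) y))).
    + apply cat_plus; apply cat_abs, cont_cat; auto.
    + pose proof (den_pos n Z x HZ). lra.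
Qed.

Definition Aset n (g : X -> R) := exists Z, Im1 n Z /\ g = G n Z.

Lemma I_gamma n : gamma_cover (Im1 n).
Proof. destruct (Fn_spec n) as [_ H]. exact H. Qed.

Lemma A_gamma n : Gamma_pt T (fun _ => 0) (Aset n).
Proof.
  destruct (I_gamma n) as [[_ Hne] [Hinf Hfin]].
  split; [|split; [|split]].
  - intros g [Z [HZ ->]]. apply G_cont; auto.
  - intro Hf. apply Hinf. eapply fin_map with (f := fun g x => g x = 0); [exact Hf|].
    intros Z HZ. exists (G n Z). split; [exists Z; auto|].
    apply pred_eq. intro x. rewrite G_zero; tauto.
  - intros [Z [HZ E]]. destruct (Hne Z HZ) as [x Nx]. apply Nx.
    apply (G_zero n Z x HZ). rewrite <- E. reflexivity.
  - intros N HN. destruct (cp_nbhd_basic T _ N (cont_const T 0) HN) as [L [eps [He HNb]]].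
    apply fin_map with (P := fun Z => exists x, In x L /\ (Im1 n Z /\ ~ Z x)) (f := G n).
    + apply fin_union. intros x _. apply Hfin.
    + intros g [[Z [HZ ->]] Ng]. exists Z; split; auto.
      apply NNPP; intro NE. apply Ng, HNb; [apply G_cont; auto|].
      intros x Hx. apply NNPP; intro NL. apply NE. exists x; split; auto. split; auto.
      rewrite <- (G_zero n Z x HZ). intro E; apply NL. rewrite E, Rminus_diag, Rabs_R0; auto.
Qed.

End Dir1.

Lemma dir1 {X} (T : topology X) :
  (forall f : X -> R, continuous T f -> Cp_S1_Gamma_pt T f) -> S1_GammaF_Gamma T.
Proof.
  intros H1 C HC.
  destruct (H1 (fun _ => 0) (cont_const T 0) (Aset T C) (A_gamma T C HC)) as [b [Hb HG]].
  set (Zsel := fun n => epsilon (@iS X) (fun Z => Im1 T C n Z /\ b n = G T C n Z)).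
  assert (HZs : forall n, Im1 T C n (Zsel n) /\ b n = G T C n (Zsel n)).
  { intro n. apply epsilon_spec. destruct (Hb n) as [Z HZ]; eauto. }
  set (Us := fun n => rep T C n (Zsel n)).
  assert (HU1 : forall n, C n (Us n)).
  { intro n. destruct (HZs n) as [HZ _]. apply (key T C HC n _ HZ). }
  assert (HU2 : forall n x, Us n x <-> b n x <> 1).
  { intros n x. destruct (HZs n) as [HZ E]. rewrite E. unfold Us. rewrite G_one; tauto. }
  exists Us. split; auto.
  destruct HG as [HGc [HGi [_ HGn]]].
  assert (Hne : forall n, exists x, ~ Us n x).
  { intro n. destruct (HC n) as [[[_ Hc] _] _]. apply Hc, HU1. }
  assert (Hfinx : forall x, finite_set (fun V => (exists n, V = Us n) /\ ~ V x)).
  { intro x.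
    apply fin_map with (P := fun g => (exists n, g = b n) /\ ~ cp_basic (fun _ => 0) (x :: nil) 1 g)
      (f := fun g y => g y <> 1).
    - apply HGn, cp_nbhd_list; [apply cont_const|lra].
    - intros V [[n ->] NV]. exists (b n). split.
      + split; eauto. intro B. specialize (B x (or_introl eq_refl)).
        assert (b n x = 1) by (apply NNPP; intro; apply NV, HU2; auto).
        rewrite H, Rminus_0_r, Rabs_R1 in B. lra.
      + apply pred_eq; intro y. apply HU2. }
  assert (Hinf : infinite_set (fun V => exists n, V = Us n)).
  { intros [l Hl].
    destruct (pts_list l (fun V => exists n, V = Us n) (fun V x => ~ V x)) as [pts Hp].
    { intros V _ [n ->]. apply Hne. }
    apply HGi.
    apply fin_sub with (Q := fun g => (exists n, g = b n) /\ ~ cp_basic (fun _ => 0) pts 1 g).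
    - intros g [n ->]. split; eauto. intro B.
      destruct (Hp (Us n) (Hl _ (ex_intro _ n eq_refl)) (ex_intro _ n eq_refl)) as [x [Hx NU]].
      specialize (B x Hx). assert (b n x = 1) by (apply NNPP; intro; apply NU, HU2; auto).
      rewrite H, Rminus_0_r, Rabs_R1 in B. lra.
    - apply HGn, cp_nbhd_list; [apply cont_const|lra]. }
  split.
  - split; [split|split]; auto.
    + intro x. apply gamma_point; auto.
    + intros V [n ->]. apply Hne.
  - intros V [n ->]. destruct (HC n) as [_ [Hcz _]]. apply (cozero_open T), Hcz, HU1.
Qed.


Fixpoint pr (s : nat) : nat * nat :=
  match s with
  | O => (0%nat, 0%nat)
  | S s' => match pr s' with (n, O) => (0%nat, S n) | (n, S k) => (S n, k) end
  end.

Lemma pr_diag d : exists s, forall j, (j <= d)%nat -> pr (s + j) = (j, d - j)%nat.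
Proof.
  induction d as [|d [s Hs]].
  - exists 0%nat. intros j Hj. assert (j = 0%nat) by lia. subst. reflexivity.
  - exists (s + d + 1)%nat. intro j. induction j as [|j IHj]; intros Hj.
    + rewrite Nat.add_0_r. replace (s + d + 1)%nat with (S (s + d)) by lia. simpl.
      rewrite (Hs d (le_n d)). rewrite ?Nat.sub_diag. first [reflexivity | f_equal; lia].
    + replace (s + d + 1 + S j)%nat with (S (s + d + 1 + j)) by lia. simpl.
      rewrite IHj by lia. replace (S d - j)%nat with (S (d - j)) by lia. first [reflexivity | f_equal; lia].
Qed.

Lemma pr_surj n k : exists s, pr s = (n, k).
Proof.
  destruct (pr_diag (n + k)) as [s Hs]. exists (s + n)%nat. rewrite Hs by lia. f_equal; lia.
Qed.

Section Sub.
Context {X : Type} (T : topology X).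

Lemma gammaF_sub (C C' : (X -> Prop) -> Prop) (F : (X -> Prop) -> (X -> Prop)) :
  Gamma_F T C ->
  (forall U, C U -> zero_set T (F U) /\ (forall x, F U x -> U x)) ->
  gamma_cover (fun Z => exists U, C U /\ Z = F U) ->
  (forall V, C' V -> C V) -> infinite_set C' ->
  (forall U V, C' U -> C' V -> F U = F V -> U = V) -> Gamma_F T C'.
Proof.
  intros [[[_ Hne] [_ Hfin]] [Hcz _]] HF [[_ HZne] [_ HZfin]] Hsub Hinf Hinj.
  assert (Hfin' : forall x, finite_set (fun W => C' W /\ ~ W x)).
  { intro x. eapply fin_sub; [|apply (Hfin x)]. intros W [HW NW]; auto. }
  split; [split; [split|split]|split].
  - intro x. apply gamma_point; auto.
  - intros U HU; apply Hne; auto.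
  - exact Hinf.
  - exact Hfin'.
  - intros U HU; apply Hcz; auto.
  - exists F. split; [intros U HU; apply HF; auto|].
    assert (HZfin' : forall x, finite_set (fun Z => (exists U, C' U /\ Z = F U) /\ ~ Z x)).
    { intro x. eapply fin_sub; [|apply (HZfin x)]. intros Z [[U [HU ->]] NZ]. split; eauto. }
    assert (HZinf : infinite_set (fun Z => exists U, C' U /\ Z = F U)).
    { intros [l Hl]. apply Hinf.
      set (pk := fun Z => epsilon (@iS X) (fun U => C' U /\ Z = F U)).
      apply fin_map with (P := fun Z => In Z l) (f := pk); [exists l; auto|].
      intros U HU. exists (F U). split; [apply Hl; eauto|].
      assert (S : C' (pk (F U)) /\ F U = F (pk (F U))).
      { unfold pk; apply epsilon_spec. eauto. }
      destruct S as [S1 S2]. apply Hinj; auto. }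
    split; [split|split]; auto.
    + intro x. apply gamma_point; auto.
    + intros Z [U [HU ->]]. destruct (Hne U (Hsub U HU)) as [x Nx].
      exists x. intro FU. apply Nx. apply (proj2 (HF U (Hsub U HU))); auto.
Qed.

Definition Fsp (D : (X -> Prop) -> Prop) (F : (X -> Prop) -> (X -> Prop)) :=
  (forall U, D U -> zero_set T (F U) /\ (forall x, F U x -> U x)) /\
    gamma_cover (fun Z => exists U, D U /\ Z = F U).

Variable D : nat -> (X -> Prop) -> Prop.
Hypothesis HD : forall n, Gamma_F T (D n).

Definition FF n := epsilon (@iF X) (Fsp (D n)).
Lemma FF_spec n : Fsp (D n) (FF n).
Proof. unfold FF; apply epsilon_spec. destruct (HD n) as [_ [_ H]]. exact H. Qed.

Definition ns s := fst (pr s).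
Definition spec s (l : list (X -> Prop)) y := D (ns s) y /\ ~ In (FF (ns s) y) (map (FF (ns s)) l).
Definition pk s l := epsilon (@iS X) (spec s l).

Lemma pk_spec s l : spec s l (pk s l).
Proof.
  unfold pk; apply epsilon_spec. destruct (FF_spec (ns s)) as [_ [_ [Hinf _]]].
  destruct (inf_ex _ Hinf (map (FF (ns s)) l)) as [Z [[U [HU ->]] NI]].
  exists U; split; auto.
Qed.

Fixpoint ch s := match s with O => nil | S s' => ch s' ++ pk s' (ch s') :: nil end.
Definition e s := pk s (ch s).

Lemma ch_in t s : (t < s)%nat -> In (e t) (ch s).
Proof.
  induction s as [|s IH]; intros H; [lia|]. simpl. apply in_or_app.
  destruct (Nat.eq_dec t s) as [->|N]; [right; left; reflexivity|left; apply IH; lia].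
Qed.

Lemma e_ff_inj s t : ns s = ns t -> FF (ns s) (e s) = FF (ns t) (e t) -> s = t.
Proof.
  intros En Ef. destruct (Nat.lt_total s t) as [L|[E|L]]; auto; exfalso.
  - destruct (pk_spec t (ch t)) as [_ N]. apply N. fold (e t). rewrite <- Ef, En.
    apply in_map, ch_in; auto.
  - destruct (pk_spec s (ch s)) as [_ N]. apply N. fold (e s). rewrite Ef, <- En.
    apply in_map, ch_in; auto.
Qed.

Lemma e_inj s t : e s = e t -> s = t.
Proof.
  intros E. destruct (Nat.lt_total s t) as [L|[E'|L]]; auto; exfalso.
  - destruct (pk_spec t (ch t)) as [_ N]. apply N. fold (e t). rewrite <- E.
    apply in_map, ch_in; auto.
  - destruct (pk_spec s (ch s)) as [_ N]. apply N. fold (e s). rewrite E.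
    apply in_map, ch_in; auto.
Qed.

Definition D' n V := exists s, ns s = n /\ V = e s.

Lemma D'_inf n : infinite_set (D' n).
Proof.
  intros [L HL].
  set (sk := fun k => epsilon (inhabits 0%nat) (fun s => pr s = (n, k))).
  assert (Hsk : forall k, pr (sk k) = (n, k)).
  { intro k. unfold sk; apply epsilon_spec, pr_surj. }
  set (l := map (fun k => e (sk k)) (seq 0 (S (length L)))).
  assert (ND : NoDup l).
  { apply Injective_map_NoDup; [|apply seq_NoDup].
    intros a b E. apply e_inj in E. pose proof (Hsk a) as Ha. pose proof (Hsk b) as Hb.
    rewrite E in Ha. rewrite Ha in Hb. injection Hb; auto. }
  assert (Inc : incl l L).
  { intros V HV. unfold l in HV. apply in_map_iff in HV. destruct HV as [k [<- _]].
    apply HL. exists (sk k). split; auto. unfold ns. rewrite Hsk. reflexivity. }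
  pose proof (NoDup_incl_length ND Inc). unfold l in H.
  rewrite length_map, length_seq in H. lia.
Qed.

Lemma disj_main : exists D0 : nat -> (X -> Prop) -> Prop,
  (forall n, Gamma_F T (D0 n)) /\ (forall n V, D0 n V -> D n V) /\
  (forall n m V, D0 n V -> D0 m V -> n = m).
Proof.
  exists D'. split; [|split].
  - intro n. destruct (FF_spec n) as [HF HG].
    apply (gammaF_sub (D n) (D' n) (FF n) (HD n) HF HG).
    + intros V [s [<- ->]]. destruct (pk_spec s (ch s)) as [H _]. exact H.
    + apply D'_inf.
    + intros U V [s [Es ->]] [t [Et ->]] E. f_equal. apply e_ff_inj; [congruence|].
      rewrite Es, Et. exact E.
  - intros n V [s [<- ->]]. destruct (pk_spec s (ch s)) as [H _]. exact H.
  - intros n m V [s [<- ->]] [t [<- E]]. apply e_inj in E. subst; auto.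
Qed.

End Sub.

Lemma disj {X} (T : topology X) (D : nat -> (X -> Prop) -> Prop) :
  (forall n, Gamma_F T (D n)) -> exists D0 : nat -> (X -> Prop) -> Prop,
  (forall n, Gamma_F T (D0 n)) /\ (forall n V, D0 n V -> D n V) /\
  (forall n m V, D0 n V -> D0 m V -> n = m).
Proof. intros HD. apply (disj_main T D HD). Qed.


Section Hard.
Context {X : Type} (T : topology X).
Variable f : X -> R.
Hypothesis Hf : continuous T f.

Lemma dist_cont g : continuous T g -> continuous T (fun x => Rabs (g x - f x)).
Proof.
  intro Hg. apply cat_cont; intro x. apply cat_abs.
  apply (cat_ext T (fun y => g y + (-1 * f y + 0))); [intro; ring|].
  apply cat_plus; [apply cont_cat; auto|apply cat_lin, cont_cat; auto].
Qed.

Lemma pos_cont t : continuous T t -> continuous T (fun x => /2 * (t x + Rabs (t x)) + 0).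
Proof.
  intro Ht. apply cat_cont; intro x. apply (cat_lin T _ _ (fun y => t y + Rabs (t y))).
  apply cat_plus; [|apply cat_abs]; apply cont_cat; auto.
Qed.

Lemma pos_zero r : /2 * (r + Rabs r) + 0 = 0 <-> r <= 0.
Proof.
  destruct (Rle_or_lt r 0) as [H|H].
  - rewrite Rabs_left1 by auto. split; intros; [auto|ring].
  - rewrite Rabs_right by lra. split; intros; lra.
Qed.

Variable A : (X -> R) -> Prop.
Variable r : R.
Hypothesis Hr : 0 < r.
Hypothesis HA : Gamma_pt T f A.
Hypothesis Hhard : forall g, A g -> exists x, ~ Rabs (g x - f x) < r.

Definition Uc (g : X -> R) := fun x => Rabs (g x - f x) < r.
Definition Zc (g : X -> R) := fun x => Rabs (g x - f x) <= r / 2.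
Definition Cc V := exists g, A g /\ V = Uc g.
Definition repc V := epsilon (@iR X) (fun g => A g /\ V = Uc g).

Lemma repc_spec V : Cc V -> A (repc V) /\ V = Uc (repc V).
Proof. intro H. unfold repc; apply epsilon_spec. exact H. Qed.

Lemma A_cont g : A g -> continuous T g.
Proof. destruct HA as [H _]; auto. Qed.

Lemma Uc_coz g : A g -> cozero_set T (Uc g).
Proof.
  intro Hg. exists (fun x => /2 * ((-1 * Rabs (g x - f x) + r) + Rabs (-1 * Rabs (g x - f x) + r)) + 0).
  split.
  - apply (pos_cont (fun x => -1 * Rabs (g x - f x) + r)).
    apply cat_cont; intro x. apply (cat_lin T _ _ (fun y => Rabs (g y - f y))).
    apply cont_cat, dist_cont, A_cont; auto.
  - intro x. unfold Uc. rewrite pos_zero. lra.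
Qed.

Lemma Zc_zero g : A g -> zero_set T (Zc g).
Proof.
  intro Hg. exists (fun x => /2 * ((1 * Rabs (g x - f x) + - (r/2)) + Rabs (1 * Rabs (g x - f x) + - (r/2))) + 0).
  split.
  - apply (pos_cont (fun x => 1 * Rabs (g x - f x) + - (r/2))).
    apply cat_cont; intro x. apply (cat_lin T _ _ (fun y => Rabs (g y - f y))).
    apply cont_cat, dist_cont, A_cont; auto.
  - intro x. unfold Zc. rewrite pos_zero. lra.
Qed.

Lemma A_inf : infinite_set A.
Proof. destruct HA as [_ [H _]]; auto. Qed.

Lemma fin_bad L e : 0 < e -> finite_set (fun g => A g /\ ~ cp_basic f L e g).
Proof. intro He. apply (gamma_fin T); auto. Qed.

Lemma good_ex L e : 0 < e -> exists g, A g /\ cp_basic f L e g.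
Proof.
  intro He. destruct (fin_bad L e He) as [l Hl].
  destruct (inf_ex A A_inf l) as [g [Ag Ng]]. exists g; split; auto.
  apply NNPP; intro NB; apply Ng, Hl; auto.
Qed.

Lemma Cc_inf : infinite_set Cc.
Proof.
  intros [l Hl].
  destruct (pts_list l Cc (fun V x => ~ V x)) as [pts Hp].
  { intros V _ [g [Ag ->]]. destruct (Hhard g Ag) as [x Nx]. exists x; auto. }
  destruct (good_ex pts r Hr) as [g [Ag Bg]].
  assert (HC : Cc (Uc g)) by (exists g; auto).
  destruct (Hp _ (Hl _ HC) HC) as [x [Hx Nx]]. apply Nx. apply Bg; auto.
Qed.

Lemma Cc_fin x : finite_set (fun V => Cc V /\ ~ V x).
Proof.
  apply fin_map with (P := fun g => A g /\ ~ cp_basic f (x :: nil) r g) (f := Uc).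
  - apply fin_bad; auto.
  - intros V [[g [Ag ->]] NV]. exists g; split; auto. split; auto.
    intro B. apply NV. apply B. left; auto.
Qed.

Lemma Img_fin x : finite_set (fun Z => (exists U, Cc U /\ Z = Zc (repc U)) /\ ~ Z x).
Proof.
  apply fin_map with (P := fun g => A g /\ ~ cp_basic f (x :: nil) (r/2) g) (f := Zc).
  - apply fin_bad; lra.
  - intros Z [[U [HU ->]] NZ]. destruct (repc_spec U HU) as [Ar _].
    exists (repc U); split; auto. split; auto.
    intro B. apply NZ. unfold Zc. left. apply B. left; auto.
Qed.

Lemma Img_inf : infinite_set (fun Z => exists U, Cc U /\ Z = Zc (repc U)).
Proof.
  intros [l Hl].
  destruct (pts_list l (fun Z => exists U, Cc U /\ Z = Zc (repc U)) (fun V x => ~ V x)) as [pts Hp].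
  { intros Z _ [U [HU ->]]. destruct (repc_spec U HU) as [Ar EU].
    destruct (Hhard _ Ar) as [x Nx]. exists x. intro Zx. apply Nx. unfold Zc in Zx. lra. }
  destruct (fin_bad pts (r/2) ltac:(lra)) as [lb Hlb].
  assert (Ex : exists U, Cc U /\ ~ In (repc U) lb).
  { apply NNPP; intro N. apply Cc_inf.
    apply fin_map with (P := fun g => In g lb) (f := Uc); [exists lb; auto|].
    intros U HU. exists (repc U). split.
    - apply NNPP; intro NI; apply N; eauto.
    - apply repc_spec; auto. }
  destruct Ex as [U [HU NI]]. destruct (repc_spec U HU) as [Ar _].
  assert (B : cp_basic f pts (r/2) (repc U)).
  { apply NNPP; intro NB; apply NI, Hlb; auto. }
  assert (HZ : exists U', Cc U' /\ Zc (repc U) = Zc (repc U')) by eauto.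
  destruct (Hp _ (Hl _ HZ) HZ) as [x [Hx Nx]]. apply Nx. unfold Zc. left. apply B; auto.
Qed.

Lemma hard_gammaF : Gamma_F T Cc.
Proof.
  split; [split; [split|split]|split].
  - intro x. apply gamma_point; [apply Cc_inf|apply Cc_fin].
  - intros V [g [Ag ->]]. destruct (Hhard g Ag) as [x Nx]. exists x; auto.
  - apply Cc_inf.
  - apply Cc_fin.
  - intros V [g [Ag ->]]. apply Uc_coz; auto.
  - exists (fun U => Zc (repc U)). split.
    + intros U HU. destruct (repc_spec U HU) as [Ar EU]. split; [apply Zc_zero; auto|].
      intros x Zx. rewrite EU. unfold Uc, Zc in *. lra.
    + split; [split|split].
      * intro x. apply gamma_point; [apply Img_inf|apply Img_fin].
      * intros Z [U [HU ->]]. destruct (repc_spec U HU) as [Ar EU].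
        destruct (Hhard _ Ar) as [x Nx]. exists x. intro Zx. apply Nx. unfold Zc in Zx. lra.
      * apply Img_inf.
      * apply Img_fin.
Qed.

End Hard.


Definition rr (n : nat) := / INR (S n).
Lemma rr_pos n : 0 < rr n.
Proof. unfold rr. apply Rinv_0_lt_compat, lt_0_INR; lia. Qed.

Lemma rr_small eps : 0 < eps -> exists N0, forall n, (N0 <= n)%nat -> rr n < eps.
Proof.
  intro He. destruct (archimed_cor1 eps He) as [N [HN HN0]].
  exists N. intros n Hn. unfold rr. eapply Rle_lt_trans; [|exact HN].
  apply Rinv_le_contravar; [apply lt_0_INR; auto|apply le_INR; lia].
Qed.

Section Dir2.
Context {X : Type} (T : topology X).
Hypothesis H2 : S1_GammaF_Gamma T.
Variable f : X -> R.
Hypothesis Hf : continuous T f.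
Variable A : nat -> (X -> R) -> Prop.
Hypothesis HA : forall n, Gamma_pt T f (A n).

Definition easy n := exists g, A n g /\ forall x, Rabs (g x - f x) < rr n.

Lemma claim : exists b : nat -> X -> R, (forall n, A n (b n)) /\
  (forall x, exists N, forall n, (N <= n)%nat -> Rabs (b n x - f x) < rr n).
Proof.
  destruct (classic (forall n, easy n)) as [Hall|Hn0].
  - exists (fun n => epsilon (@iR X) (fun g => A n g /\ forall x, Rabs (g x - f x) < rr n)).
    assert (S : forall n, A n (epsilon (@iR X) (fun g => A n g /\ forall x, Rabs (g x - f x) < rr n))
       /\ forall x, Rabs (epsilon (@iR X) (fun g => A n g /\ forall x, Rabs (g x - f x) < rr n) x - f x) < rr n).
    { intro n. apply epsilon_spec, Hall. }
    split; [intro n; apply S|]. intro x. exists 0%nat. intros n _. apply S.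
  - apply not_all_ex_not in Hn0. destruct Hn0 as [n0 Hn0].
    assert (Hhard : forall n, ~ easy n -> forall g, A n g -> exists x, ~ Rabs (g x - f x) < rr n).
    { intros n Ne g Ag. apply NNPP; intro N. apply Ne. exists g; split; auto.
      intro x. apply NNPP; intro; apply N; eauto. }
    set (D := fun n => if excluded_middle_informative (easy n) then Cc f (A n0) (rr n0) else Cc f (A n) (rr n)).
    assert (HD : forall n, Gamma_F T (D n)).
    { intro n. unfold D. destruct (excluded_middle_informative (easy n)) as [E|E].
      - apply hard_gammaF; auto. apply rr_pos.
      - apply hard_gammaF; auto. apply rr_pos. }
    destruct (disj T D HD) as [D0 [HD0 [HD0s HD0d]]].
    destruct (H2 D0 HD0) as [U [HU [[[_ _] [_ Hfin]] _]]].
    assert (Hidx : forall x, exists N, forall n, (N <= n)%nat -> U n x).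
    { intro x. destruct (Hfin x) as [lb Hlb].
      destruct (list_bound lb (fun V n => U n <> V)) as [K HK].
      { intros V _. destruct (classic (exists m, U m = V)) as [[m Em]|NE].
        - exists (S m). intros n Hn E. assert (n = m).
          { apply (HD0d n m V); [rewrite <- E; auto|rewrite <- Em; auto]. } lia.
        - exists 0%nat. intros n _ E. apply NE; eauto. }
      exists K. intros n Hn. apply NNPP; intro NU.
      apply (HK (U n) n); auto. apply Hlb. split; eauto. }
    set (b := fun n => match excluded_middle_informative (easy n) with
                       | left _ => epsilon (@iR X) (fun g => A n g /\ forall x, Rabs (g x - f x) < rr n)
                       | right _ => repc f (A n) (rr n) (U n) end).
    assert (Hb : forall n, A n (b n) /\ (easy n -> forall x, Rabs (b n x - f x) < rr n) /\
                 (~ easy n -> U n = Uc f (rr n) (b n))).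
    { intro n. unfold b. destruct (excluded_middle_informative (easy n)) as [E|E].
      - assert (S := @epsilon_spec _ (@iR X) _ E). destruct S as [S1 S2].
        split; auto. split; auto. intro; contradiction.
      - assert (Cn : Cc f (A n) (rr n) (U n)).
        { assert (DU := HD0s n (U n) (HU n)). unfold D in DU.
          destruct (excluded_middle_informative (easy n)); [contradiction|exact DU]. }
        destruct (repc_spec f (A n) (rr n) (U n) Cn) as [R1 R2].
        split; auto. split; auto. intro; contradiction. }
    exists b. split; [intro n; apply Hb|].
    intro x. destruct (Hidx x) as [N HN]. exists N. intros n Hn.
    destruct (Hb n) as [_ [Be Bh]].
    destruct (classic (easy n)) as [E|E]; [apply Be; auto|].
    specialize (HN n Hn). rewrite (Bh E) in HN. exact HN.
Qed.

End Dir2.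

Lemma dir2 {X} (T : topology X) : S1_GammaF_Gamma T ->
  forall f, continuous T f -> Cp_S1_Gamma_pt T f.
Proof.
  intros H2 f Hf A HA. destruct (claim T H2 f Hf A HA) as [b [Hb Hc]].
  exists b. split; auto.
  split; [|split; [|split]].
  - intros g [n ->]. destruct (HA n) as [Hc' _]; apply Hc', Hb.
  - intros [L HL].
    destruct (list_bound L (fun g n => b n <> g)) as [K HK].
    { intros g _. destruct (classic (g = f)) as [->|Ng].
      - exists 0%nat. intros n _ E. destruct (HA n) as [_ [_ [Nf _]]]. apply Nf. rewrite <- E. apply Hb.
      - assert (Ex : exists x0, g x0 <> f x0).
        { apply NNPP; intro N. apply Ng. apply functional_extensionality. intro x.
          apply NNPP; intro; apply N; eauto. }
        destruct Ex as [x0 Hx0]. assert (Hd : 0 < Rabs (g x0 - f x0)).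
        { apply Rabs_pos_lt. intro; apply Hx0; lra. }
        destruct (Hc x0) as [N1 HN1]. destruct (rr_small _ Hd) as [N0 HN0].
        exists (Nat.max N1 N0). intros n Hn E.
        specialize (HN1 n ltac:(lia)). specialize (HN0 n ltac:(lia)). rewrite E in HN1. lra. }
    apply (HK (b K) K); auto. apply HL. eauto.
  - intros [n E]. destruct (HA n) as [_ [_ [Nf _]]]. apply Nf. rewrite E. apply Hb.
  - intros N HN. destruct (cp_nbhd_basic T f N Hf HN) as [L [eps [He HNb]]].
    destruct (rr_small eps He) as [N0 HN0].
    destruct (list_bound L (fun x n => Rabs (b n x - f x) < eps)) as [K HK].
    { intros x _. destruct (Hc x) as [N1 HN1]. exists (Nat.max N1 N0). intros n Hn.
      specialize (HN1 n ltac:(lia)). specialize (HN0 n ltac:(lia)). lra. }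
    apply fin_map with (P := fun k => In k (seq 0 K)) (f := b); [exists (seq 0 K); auto|].
    intros g [[n ->] Ng]. exists n. split; auto. apply in_seq.
    destruct (Nat.lt_ge_cases n K) as [Hl|Hl]; [lia|]. exfalso. apply Ng.
    apply HNb; [destruct (HA n) as [Hc' _]; apply Hc', Hb|].
    intros x Hx. apply HK; auto.
Qed.


Theorem mainTheorem9 (X : Type) (T : topology X) (HT : tychonoff T) :
  (forall f : X -> R, continuous T f -> Cp_S1_Gamma_pt T f) <-> S1_GammaF_Gamma T.
Proof.
  split; [apply dir1|apply dir2].
Qed.
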